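(* Let $A$ be a commutative ring. For $X\in B$ and $a_1,\ldots,a_n\in A$ ($n\ge0$) with $E(a_n)\cdots E(a_1)\in B$, let $\langle X,(a_1,\ldots,a_n)\rangle$ denote the class in the edge-path group $\pi_1(Y(A),\infty)$ of the edge loop $(\infty\cdot X,\ \infty\cdot E(a_1)X,\ \infty\cdot E(a_2)E(a_1)X,\ldots,\ \infty\cdot E(a_n)\cdots E(a_1)X)$; write $\langle X\rangle$ when $n=0$, and $T(p):=E(a_n)\cdots E(a_1)X$ for $p=\langle X,(a_1,\ldots,a_n)\rangle$. Then $\pi_1(Y(A),\infty)$ is generated by these symbols, and the following families form a complete set of defining relations: (1) For $p=\langle X,(a_1,\ldots,a_n)\rangle$ and $q=\langle Y,(b_1,\ldots,b_m)\rangle$: $p\cdot q=\langle X,(a_1,\ldots,a_n,b'_1,\ldots,b'_m)\rangle$, where $Z:=YX^{-1}E(a_1)^{-1}\cdots E(a_n)^{-1}=\begin{pmatrix}u&0\\c&u^{-1}\end{pmatrix}\in B$, $b'_1=u^2b_1+cu$, and $b'_j=u^{2(-1)^{j-1}}b_j$ for $j\ge2$. (2) $\langle X\rangle=1$ for all $X\in B$. (3) $\langle X,(a_1,\ldots,a_{n-1},0)\rangle=\langle X,(a_1,\ldots,a_{n-2})\rangle$ and $\langle X,(a_1,\ldots,a_i,0,a_{i+2},\ldots,a_n)\rangle=\langle X,(a_1,\ldots,a_{i-1},a_i+a_{i+2},a_{i+3},\ldots,a_n)\rangle$. (4) For $u\in A^\times$: $\langle X,(a_1,\ldots,a_{n-1},u)\rangle=\langle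 X,(a_1,\ldots,a_{n-2},a_{n-1}-u^{-1})\rangle$ and $\langle X,(a_1,\ldots,a_i,u,a_{i+2},a_{i+3},a_{i+4},\ldots)\rangle=\langle X,(a_1,\ldots,a_{i-1},a_i-u^{-1},u^2a_{i+2}-u,u^{-2}a_{i+3},u^2a_{i+4},\ldots)\rangle$ (subsequent entries multiplied alternately by $u^{-2}$ and $u^{2}$).
   Context: A unimodular row over $A$ is $(a,b)\in A^2$ with $aA+bA=A$. $\Gamma(A)$ is the graph whose vertices are classes of unimodular rows modulo multiplication by units, with $\{[u],[v]\}$ an edge iff the matrix with rows $u,v$ lies in $\mathrm{GL}_2(A)$; $Y(A)$ is its clique complex. $\mathrm{SL}_2(A)$ acts on vertices on the right by $[u]\cdot M=[uM]$; $\infty=[(1,0)]$. $E(a)=\begin{pmatrix}a&1\\-1&0\end{pmatrix}$. $B$ is the group of lower triangular matrices in $\mathrm{SL}_2(A)$ (the stabilizer of $\infty$). The edge-path group $\pi_1(Y(A),\infty)$ consists of edge loops at $\infty$ (sequences of vertices, consecutive ones adjacent, beginning and ending at $\infty$) modulo the equivalence generated by deleting $x_{i+1},x_{i+2}$ when $x_i=x_{i+2}$ and deleting $x_{i+1}$ when $\{x_i,x_{i+1},x_{i+2}\}$ is a 2-simplex; the product is concatenation. *)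

(* Defs.v *)
From HB Require Import structures.
From mathcomp Require Import all_boot all_order all_algebra.
From Stdlib Require Import Relations.
Set Implicit Arguments. Unset Strict Implicit. Unset Printing Implicit Defensive.
Import GRing.Theory.
Local Open Scope ring_scope.

Section SL2.
Variable A : comUnitRingType.

Definition i0 : 'I_2 := @ord0 1.
Definition i1 : 'I_2 := @ord_max 1.

Definition Emx (a : A) : 'M[A]_2 :=
  \matrix_(i < 2, j < 2)
    (if i == i0 then (if j == i0 then a else 1) else (if j == i0 then -1 else 0)).

Definition inB (X : 'M[A]_2) : bool := (X i0 i1 == 0) && (\det X == 1).

(* E(a_n) ... E(a_1) for as = [:: a_1; ...; a_n] *)
Definition Eprod (s : seq A) : 'M[A]_2 := foldl (fun M a => Emx a *m M) 1%:M s.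
Definition Tmat (X : 'M[A]_2) (s : seq A) : 'M[A]_2 := Eprod s *m X.

Definition inf_row : 'rV[A]_2 := \row_(j < 2) (if j == i0 then 1 else 0).
Definition act (u : 'rV[A]_2) (M : 'M[A]_2) : 'rV[A]_2 := u *m M.
Definition unimodular (u : 'rV[A]_2) : Prop :=
  exists x y : A, u 0 i0 * x + u 0 i1 * y = 1.
(* same vertex: equal modulo multiplication by a unit *)
Definition rows_equiv (u v : 'rV[A]_2) : Prop :=
  exists2 l : A, l \is a GRing.unit & v = l *: u.
Definition rows2 (u v : 'rV[A]_2) : 'M[A]_2 :=
  \matrix_(i < 2, j < 2) (if i == i0 then u 0 j else v 0 j).
(* edge of Gamma(A): the matrix with rows u, v lies in GL_2(A) *)
Definition adjacent (u v : 'rV[A]_2) : bool := \det (rows2 u v) \is a GRing.unit.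

(* edge loops at infinity, vertices given by unimodular representatives *)
Definition is_loop (s : seq 'rV[A]_2) : Prop :=
  exists x0 s', s = x0 :: s' /\ rows_equiv x0 inf_row /\
    rows_equiv (last x0 s') inf_row /\
    (forall x, x \in s -> unimodular x) /\ path adjacent x0 s'.

Inductive loop_move : seq 'rV[A]_2 -> seq 'rV[A]_2 -> Prop :=
| lm_rep l r x y : rows_equiv x y -> loop_move (l ++ x :: r) (l ++ y :: r)
| lm_back l r x y z : rows_equiv x z ->
    loop_move (l ++ [:: x; y; z] ++ r) (l ++ [:: x] ++ r)
| lm_simplex l r x y z : adjacent x y -> adjacent y z -> adjacent x z ->
    loop_move (l ++ [:: x; y; z] ++ r) (l ++ [:: x; z] ++ r).

Definition loop_step (s t : seq 'rV[A]_2) : Prop :=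
  [/\ is_loop s, is_loop t & loop_move s t].

(* equality in the edge-path group pi_1(Y(A), infinity) *)
Definition loop_equiv : relation (seq 'rV[A]_2) := clos_refl_sym_trans _ loop_step.

Definition cat_loop (s t : seq 'rV[A]_2) := s ++ behead t.

Definition symbol := ('M[A]_2 * seq A)%type.
Definition valid_sym (p : symbol) : bool := inB p.1 && inB (Eprod p.2).
Definition sym_loop (p : symbol) : seq 'rV[A]_2 :=
  [seq act inf_row M | M <- p.1 :: scanl (fun M a => Emx a *m M) p.1 p.2].

(* words in the symbols and their inverses: (true,p) = p, (false,p) = p^-1 *)
Definition word := seq (bool * symbol).
Definition valid_word (w : word) : bool := all (fun x => valid_sym x.2) w.
Definition letter_loop (x : bool * symbol) :=
  if x.1 then sym_loop x.2 else rev (sym_loop x.2).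
Definition eval_word (w : word) : seq 'rV[A]_2 :=
  foldr (fun x l => cat_loop (letter_loop x) l) [:: inf_row] w.

Fixpoint alt (e : bool) (u : A) (s : seq A) : seq A :=
  if s is b :: s' then ((if e then u ^+ 2 else u ^- 2) * b) :: alt (~~ e) u s'
  else [::].

Definition Zmat (Y X : 'M[A]_2) (s : seq A) : 'M[A]_2 :=
  foldl (fun M a => M *m invmx (Emx a)) (Y *m invmx X) s.

Definition bprime (Z : 'M[A]_2) (s : seq A) : seq A :=
  let u := Z i0 i0 in let c := Z i1 i0 in
  if s is b1 :: s' then (u ^+ 2 * b1 + c * u) :: alt false u s' else [::].

Definition pos (p : symbol) : bool * symbol := (true, p).

Inductive rel_pair : word -> word -> Prop :=
| rp_cancel b p : valid_sym p -> rel_pair [:: (b, p); (~~ b, p)] [::]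
| rp_mul X s Y t : valid_sym (X, s) -> valid_sym (Y, t) ->
    rel_pair [:: pos (X, s); pos (Y, t)] [:: pos (X, s ++ bprime (Zmat Y X s) t)]
| rp_triv X : inB X -> rel_pair [:: pos (X, [::])] [::]
| rp_zero_end X s a : valid_sym (X, s ++ [:: a; 0]) ->
    rel_pair [:: pos (X, s ++ [:: a; 0])] [:: pos (X, s)]
| rp_zero_mid X s a b t : valid_sym (X, s ++ [:: a; 0; b] ++ t) ->
    rel_pair [:: pos (X, s ++ [:: a; 0; b] ++ t)] [:: pos (X, s ++ [:: a + b] ++ t)]
| rp_unit_end X s a u : u \is a GRing.unit -> valid_sym (X, s ++ [:: a; u]) ->
    rel_pair [:: pos (X, s ++ [:: a; u])] [:: pos (X, s ++ [:: a - u^-1])]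
| rp_unit_mid X s a u b t : u \is a GRing.unit -> valid_sym (X, s ++ [:: a; u; b] ++ t) ->
    rel_pair [:: pos (X, s ++ [:: a; u; b] ++ t)]
             [:: pos (X, s ++ [:: a - u^-1; u ^+ 2 * b - u] ++ alt false u t)].

Definition word_step (w w' : word) : Prop :=
  exists l r u v, rel_pair u v /\ w = l ++ u ++ r /\ w' = l ++ v ++ r.

(* equality in the group presented by the symbols and relations (1)-(4) *)
Definition word_equiv : relation word := clos_refl_sym_trans _ word_step.

End SL2.

(* Main.v *)
Require Import Defs.
From HB Require Import structures.
From mathcomp Require Import all_boot all_order all_algebra.
From mathcomp Require Import ring.
From Stdlib Require Import Relations.
Set Implicit Arguments. Unset Strict Implicit. Unset Printing Implicit Defensive.
Import GRing.Theory.
Local Open Scope ring_scope.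

Section P.
Variable A : comUnitRingType.
Implicit Types (a b c : A) (u v w : 'rV[A]_2) (M N X Y Z D T : 'M[A]_2).

Lemma ord2P (j : 'I_2) : j = i0 \/ j = i1.
Proof. case: j => [[|[|n]] H]; [left|right|by []]; exact: val_inj. Qed.

Lemma mul2E m n (P : 'M[A]_(m,2)) (Q : 'M[A]_(2,n)) i j :
  (P *m Q) i j = P i i0 * Q i0 j + P i i1 * Q i1 j.
Proof.
rewrite mxE !big_ord_recl big_ord0 addr0.
by congr (_ * _ + _ * _); congr (_ _ _); apply: val_inj.
Qed.

Lemma det2 (M : 'M[A]_2) : \det M = M i0 i0 * M i1 i1 - M i0 i1 * M i1 i0.
Proof.
rewrite (expand_det_row _ i0) !big_ord_recl big_ord0 addr0 /cofactor.
rewrite [row' _ _]mx11_scalar [row' _ (col' _ M)]mx11_scalar !det_mx11 !mxE.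
rewrite (_ : lift i0 0 = i1); last by apply: val_inj.
idtac.
idtac.
idtac.
rewrite (_ : (ord0 : 'I_2) = i0); last by apply: val_inj.
rewrite (_ : lift i1 0 = i0); last by apply: val_inj.
rewrite eqxx !mulr1n /= expr0 mul1r expr1 mulN1r; ring.
Qed.
Lemma mx2P (M N : 'M[A]_2) : M i0 i0 = N i0 i0 -> M i0 i1 = N i0 i1 ->
  M i1 i0 = N i1 i0 -> M i1 i1 = N i1 i1 -> M = N.
Proof.
move=> h1 h2 h3 h4; apply/matrixP => i j.
by case: (ord2P i) => ->; case: (ord2P j) => ->.
Qed.

Lemma row2P (u v : 'rV[A]_2) : u 0 i0 = v 0 i0 -> u 0 i1 = v 0 i1 -> u = v.
Proof.
move=> h1 h2; apply/rowP => j.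
by case: (ord2P j) => ->.
Qed.

Lemma E00 a : Emx a i0 i0 = a. Proof. by rewrite mxE. Qed.
Lemma E01 a : Emx a i0 i1 = 1. Proof. by rewrite mxE. Qed.
Lemma E10 a : Emx a i1 i0 = -1. Proof. by rewrite mxE. Qed.
Lemma E11 a : Emx a i1 i1 = 0. Proof. by rewrite mxE. Qed.
Lemma inf0 : (@inf_row A) 0 i0 = 1. Proof. by rewrite mxE. Qed.
Lemma inf1 : (@inf_row A) 0 i1 = 0. Proof. by rewrite mxE. Qed.
Lemma one00 : (1%:M : 'M[A]_2) i0 i0 = 1. Proof. by rewrite mxE. Qed.
Lemma one01 : (1%:M : 'M[A]_2) i0 i1 = 0. Proof. by rewrite mxE. Qed.
Lemma one10 : (1%:M : 'M[A]_2) i1 i0 = 0. Proof. by rewrite mxE. Qed.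
Lemma one11 : (1%:M : 'M[A]_2) i1 i1 = 1. Proof. by rewrite mxE. Qed.
Lemma r2_00 u v : rows2 u v i0 i0 = u 0 i0. Proof. by rewrite mxE. Qed.
Lemma r2_01 u v : rows2 u v i0 i1 = u 0 i1. Proof. by rewrite mxE. Qed.
Lemma r2_10 u v : rows2 u v i1 i0 = v 0 i0. Proof. by rewrite mxE. Qed.
Lemma r2_11 u v : rows2 u v i1 i1 = v 0 i1. Proof. by rewrite mxE. Qed.


Definition rw (M : 'M[A]_2) : 'rV[A]_2 := inf_row A *m M.
Definition g (M : 'M[A]_2) (a : A) : 'M[A]_2 := Emx a *m M.

Lemma rwE M j : rw M 0 j = M i0 j.
Proof. by rewrite /rw mul2E inf0 inf1 mul1r mul0r addr0. Qed.

Lemma scE (l : A) (u : 'rV[A]_2) j : (l *: u) 0 j = l * u 0 j.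
Proof. by rewrite mxE. Qed.

Lemma inB_prop (Z : 'M[A]_2) : inB Z -> Z i0 i1 = 0 /\ Z i0 i0 * Z i1 i1 = 1.
Proof. by case/andP => /eqP h /eqP; rewrite det2 h mul0r subr0. Qed.

Lemma inB_unit Z : inB Z -> Z i0 i0 \is a GRing.unit.
Proof. by case/inB_prop => _ h; apply/unitrPr; exists (Z i1 i1). Qed.

Lemma inB_inv00 Z : inB Z -> (Z i0 i0)^-1 = Z i1 i1.
Proof. by case/inB_prop => _ h; apply: mulr1_eq. Qed.

Lemma inB_unitmx Z : inB Z -> Z \in unitmx.
Proof. by case/andP => _ /eqP h; rewrite unitmxE h unitr1. Qed.

Lemma inB_mul X Y : inB X -> inB Y -> inB (X *m Y).
Proof.
move=> hX hY; case/inB_prop: (hX) => x01 _; case/inB_prop: (hY) => y01 _.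
case/andP: hX => _ /eqP dX; case/andP: hY => _ /eqP dY.
by rewrite /inB det_mulmx dX dY mulr1 eqxx mul2E x01 y01 mulr0 mul0r addr0 eqxx.
Qed.

Lemma inB_inv X : inB X -> inB (invmx X).
Proof.
move=> hX; have hu := inB_unit hX; have hm := inB_unitmx hX.
case/andP: (hX) => _ /eqP dX.
rewrite /inB det_inv dX invr1 eqxx andbT.
have := mulmxV hm => /(congr1 (fun M => M i0 i1)).
rewrite mul2E (proj1 (inB_prop hX)) mul0r addr0 one01 => h.
by rewrite -(mulrI_eq0 _ (mulrI hu)) h.
Qed.


Lemma req_refl u : rows_equiv u u.
Proof. by exists 1; rewrite ?unitr1 ?scale1r. Qed.
Lemma req_sym u v : rows_equiv u v -> rows_equiv v u.
Proof. by case=> l hl ->; exists l^-1; rewrite ?unitrV // scalerA mulVr // scale1r. Qed.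
Lemma req_trans u v w : rows_equiv u v -> rows_equiv v w -> rows_equiv u w.
Proof. by case=> l hl -> [l' hl' ->]; exists (l' * l); rewrite ?unitrM ?hl ?hl' // scalerA. Qed.
Lemma req_mul u v M : rows_equiv u v -> rows_equiv (u *m M) (v *m M).
Proof. by case=> l hl ->; exists l; rewrite // scalemxAl. Qed.
Lemma req_scl l u : l \is a GRing.unit -> rows_equiv u (l *: u).
Proof. by move=> hl; exists l. Qed.

Lemma detE2 u v : \det (rows2 u v) = u 0 i0 * v 0 i1 - u 0 i1 * v 0 i0.
Proof. by rewrite det2 r2_00 r2_01 r2_10 r2_11. Qed.

Lemma adj_scl l u v : l \is a GRing.unit -> adjacent (l *: u) v = adjacent u v.
Proof.
move=> hl; rewrite /adjacent !detE2 !scE.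
have -> : l * u 0 i0 * v 0 i1 - l * u 0 i1 * v 0 i0 =
  l * (u 0 i0 * v 0 i1 - u 0 i1 * v 0 i0) by ring.
by rewrite unitrM hl.
Qed.
Lemma adj_sym u v : adjacent u v = adjacent v u.
Proof.
rewrite /adjacent !detE2.
have -> : v 0 i0 * u 0 i1 - v 0 i1 * u 0 i0 = - (u 0 i0 * v 0 i1 - u 0 i1 * v 0 i0) by ring.
by rewrite unitrN.
Qed.
Lemma adj_scr l u v : l \is a GRing.unit -> adjacent u (l *: v) = adjacent u v.
Proof. by move=> hl; rewrite adj_sym adj_scl // adj_sym. Qed.
Lemma adj_eqv_l u u' v : rows_equiv u u' -> adjacent u' v = adjacent u v.
Proof. by case=> l hl ->; rewrite adj_scl. Qed.
Lemma adj_eqv_r u v v' : rows_equiv v v' -> adjacent u v' = adjacent u v.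
Proof. by case=> l hl ->; rewrite adj_scr. Qed.
Lemma adj_mul u v M : M \in unitmx -> adjacent (u *m M) (v *m M) = adjacent u v.
Proof.
rewrite unitmxE det2 /adjacent !detE2 !mul2E => hM.
set d := (M i0 i0 * M i1 i1 - M i0 i1 * M i1 i0) in hM *.
have -> : (u 0 i0 * M i0 i0 + u 0 i1 * M i1 i0) * (v 0 i0 * M i0 i1 + v 0 i1 * M i1 i1) -
  (u 0 i0 * M i0 i1 + u 0 i1 * M i1 i1) * (v 0 i0 * M i0 i0 + v 0 i1 * M i1 i0) =
  (u 0 i0 * v 0 i1 - u 0 i1 * v 0 i0) * d by rewrite /d; ring.
by rewrite unitrM hM andbT.
Qed.
Lemma adj_inf w : adjacent (inf_row A) w = (w 0 i1 \is a GRing.unit).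
Proof. by rewrite /adjacent detE2 inf0 inf1 mul1r mul0r subr0. Qed.

Lemma detE a : \det (Emx a) = 1.
Proof. by rewrite det2 E00 E01 E10 E11 mulr0 mul1r opprK add0r. Qed.
Lemma Emx_unit a : Emx a \in unitmx.
Proof. by rewrite unitmxE detE unitr1. Qed.
Lemma det_foldl M s : \det (foldl g M s) = \det M.
Proof. by elim: s M => //= a s IH M; rewrite IH det_mulmx detE mul1r. Qed.
Lemma unit_foldl M s : M \in unitmx -> foldl g M s \in unitmx.
Proof. by rewrite !unitmxE det_foldl. Qed.
Lemma foldl_gM M N s : foldl g (M *m N) s = foldl g M s *m N.
Proof. by elim: s M => //= a s IH M; rewrite -IH /g mulmxA. Qed.

Lemma unimod_scl l u : l \is a GRing.unit -> unimodular u -> unimodular (l *: u).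
Proof.
move=> hl [x [y h]]; exists (x / l), (y / l); rewrite !scE.
have -> : l * u 0 i0 * (x / l) + l * u 0 i1 * (y / l) = (l / l) * (u 0 i0 * x + u 0 i1 * y) by ring.
by rewrite h divrr // mulr1.
Qed.
Lemma unimod_eqv u v : rows_equiv u v -> unimodular u -> unimodular v.
Proof. by case=> l hl ->; apply: unimod_scl. Qed.
Lemma unimod_rw M : M \in unitmx -> unimodular (rw M).
Proof.
rewrite unitmxE det2 => hd; exists (M i1 i1 / (M i0 i0 * M i1 i1 - M i0 i1 * M i1 i0)).
exists (- M i1 i0 / (M i0 i0 * M i1 i1 - M i0 i1 * M i1 i0)); rewrite !rwE.
set d := (M i0 i0 * M i1 i1 - M i0 i1 * M i1 i0) in hd *.
have -> : M i0 i0 * (M i1 i1 / d) + M i0 i1 * (- M i1 i0 / d) = d / d by rewrite /d; ring.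
by rewrite divrr.
Qed.

Lemma rw_B D L : inB D -> rw (D *m L) = D i0 i0 *: rw L.
Proof.
move=> hD; case: (inB_prop hD) => d01 _.
by apply: row2P; rewrite scE !rwE mul2E d01 mul0r addr0.
Qed.
Lemma req_rwB D L : inB D -> rows_equiv (rw L) (rw (D *m L)).
Proof. by move=> hD; rewrite rw_B //; apply/req_scl/inB_unit. Qed.


Inductive F2 {T : Type} (R : T -> T -> Prop) : seq T -> seq T -> Prop :=
| F2nil : F2 R [::] [::]
| F2cons x y s t : R x y -> F2 R s t -> F2 R (x :: s) (y :: t).

Definition peq := F2 (@rows_equiv A).

Lemma peq_refl s : peq s s.
Proof. by elim: s => [|x s IH]; constructor => //; apply: req_refl. Qed.
Lemma peq_sym s t : peq s t -> peq t s.
Proof. by elim=> [|x y s' t' h _ IH]; constructor => //; apply: req_sym. Qed.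
Lemma peq_trans s t r : peq s t -> peq t r -> peq s r.
Proof.
move=> h; elim: h r => [|x y s' t' hxy _ IH] r h2; inversion h2; subst; first exact: F2nil.
by constructor; [apply: req_trans hxy _ | apply: IH].
Qed.
Lemma peq_cat s t s' t' : peq s t -> peq s' t' -> peq (s ++ s') (t ++ t').
Proof. by elim=> //= x y s1 t1 h _ IH h'; constructor => //; apply: IH. Qed.
Lemma F2_last (Ty : Type) (R : Ty -> Ty -> Prop) s t : F2 R s t -> forall x y, R x y -> R (last x s) (last y t).
Proof. by elim=> //= x' y' s' t' h _ IH x y _; apply: IH. Qed.
Lemma peq_last x y s t : peq (x :: s) (y :: t) -> rows_equiv (last x s) (last y t).
Proof. by move=> h; inversion h; subst; apply: F2_last. Qed.
Lemma peq_mem s t : peq s t -> forall y, y \in t -> exists2 x, x \in s & rows_equiv x y.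
Proof.
elim=> // x y s' t' h _ IH z; rewrite inE => /orP [/eqP -> | /IH [x' hx' h']].
  by exists x; rewrite ?inE ?eqxx.
by exists x'; rewrite // inE hx' orbT.
Qed.

Definition ratio w : A := if w 0 i1 \is a GRing.unit then w 0 i0 / w 0 i1 else 0.

Fixpoint Nf M (vs : seq 'rV[A]_2) : seq A :=
  if vs is v :: vs' then let a := ratio (v *m invmx M) in a :: Nf (g M a) vs' else [::].

Definition Ncan (s : seq 'rV[A]_2) := Nf 1%:M (behead s).

Lemma ratio_scl l w : l \is a GRing.unit -> ratio (l *: w) = ratio w.
Proof.
move=> hl; rewrite /ratio !scE unitrM hl /=; case: ifP => // hw.
rewrite invrM //.
have -> : l * w 0 i0 * ((w 0 i1)^-1 * l^-1) = (l * l^-1) * (w 0 i0 * (w 0 i1)^-1) by ring.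
by rewrite divrr // mul1r.
Qed.

Lemma Nf_peq M vs vs' : peq vs vs' -> Nf M vs = Nf M vs'.
Proof.
move=> h; elim: h M => //= x y s t [l hl ->] _ IH M.
by rewrite -scalemxAl ratio_scl // IH.
Qed.

Lemma last_scanl M (c : seq A) : last M (scanl g M c) = foldl g M c.
Proof. by elim: c M => //= a c IH M; rewrite IH. Qed.

Lemma last_rw_scanl M (c : seq A) : last (rw M) (map rw (scanl g M c)) = rw (foldl g M c).
Proof. by rewrite last_map last_scanl. Qed.

Lemma alt_inv e (u : A) (s : seq A) : alt e u^-1 s = alt (~~ e) u s.
Proof.
elim: s e => //= b s IH e; rewrite IH negbK; congr (_ * _ :: _).
by case: e; rewrite /= exprVn // invrK.
Qed.
Lemma alt_one e (u : A) (s : seq A) : u ^+ 2 = 1 -> alt e u s = s.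
Proof.
move=> h; elim: s e => //= b s IH e; rewrite IH.
by case: e; rewrite h ?invr1 mul1r.
Qed.
Lemma alt_cancel e (u : A) (s : seq A) : u \is a GRing.unit -> alt e u (alt (~~ e) u s) = s.
Proof.
move=> hu; elim: s e => //= b s IH e; rewrite IH; congr (_ :: _).
have hu2 : u ^+ 2 \is a GRing.unit by rewrite unitrX.
by case: e; rewrite /= mulrA ?divrr ?mulVr // mul1r.
Qed.

Definition mk2 (p q r t : A) : 'M[A]_2 :=
  \matrix_(i < 2, j < 2) (if i == i0 then (if j == i0 then p else q) else (if j == i0 then r else t)).
Lemma mk00 p q r t : mk2 p q r t i0 i0 = p. Proof. by rewrite mxE. Qed.
Lemma mk01 p q r t : mk2 p q r t i0 i1 = q. Proof. by rewrite mxE. Qed.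
Lemma mk10 p q r t : mk2 p q r t i1 i0 = r. Proof. by rewrite mxE. Qed.
Lemma mk11 p q r t : mk2 p q r t i1 i1 = t. Proof. by rewrite mxE. Qed.

Lemma bprime_diag (u : A) (t : seq A) : bprime (mk2 u^-1 0 0 u) t = alt false u t.
Proof.
case: t => //= b t; rewrite mk00 mk10 mul0r addr0 alt_inv /=; congr (_ * _ :: _).
by rewrite exprVn.
Qed.

Lemma core_id Z b : inB Z ->
  Emx b *m Z = mk2 (Z i1 i1) 0 0 (Z i0 i0) *m Emx (Z i0 i0 ^+ 2 * b + Z i1 i0 * Z i0 i0).
Proof.
case/inB_prop => z01 h.
apply: mx2P; rewrite ?mul2E ?mk00 ?mk01 ?mk10 ?mk11 ?E00 ?E01 ?E10 ?E11 ?z01.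
- have -> : Z i1 i1 * (Z i0 i0 ^+ 2 * b + Z i1 i0 * Z i0 i0) + 0 * -1 =
     (Z i0 i0 * Z i1 i1) * (Z i0 i0 * b + Z i1 i0) by ring.
  by rewrite h; ring.
- ring.
- ring.
- ring.
Qed.

Lemma diag_inB Z : inB Z -> inB (mk2 (Z i1 i1) 0 0 (Z i0 i0)).
Proof.
case/inB_prop => _ h; rewrite /inB det2 !mk00 !mk01 !mk10 !mk11 eqxx /=.
by rewrite mul0r subr0 mulrC h.
Qed.

Lemma L3 t : forall Z T, inB Z ->
  F2 (fun L R => exists2 D, inB D & R = D *m L) (scanl g T (bprime Z t)) (scanl g (Z *m T) t).
Proof.
elim: t => [|b t IH] Z T hZ; first by constructor.
rewrite /=; set b' := _ + _.
have hc := core_id b hZ.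
set Z' := mk2 _ _ _ _ in hc.
have hZ' : inB Z' := diag_inB hZ.
have eq1 : g (Z *m T) b = Z' *m g T b' by rewrite /g mulmxA hc -mulmxA.
constructor; first by exists Z'; rewrite // eq1.
have := IH Z' (g T b') hZ'; rewrite -eq1.
by rewrite /Z' -(inB_inv00 hZ) bprime_diag.
Qed.

Lemma L3fold t : forall Z T, inB Z ->
  exists2 D, inB D & foldl g (Z *m T) t = D *m foldl g T (bprime Z t).
Proof.
elim: t => [|b t IH] Z T hZ; first by exists Z.
rewrite /=; set b' := _ + _.
have hc := core_id b hZ.
set Z' := mk2 _ _ _ _ in hc.
have hZ' : inB Z' := diag_inB hZ.
have eq1 : g (Z *m T) b = Z' *m g T b' by rewrite /g mulmxA hc -mulmxA.
have := IH Z' (g T b') hZ'; rewrite -eq1.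
by rewrite /Z' -(inB_inv00 hZ) bprime_diag.
Qed.


Lemma rwE_g M a : rw (g M a) = rw (Emx a) *m M.
Proof. by rewrite /rw /g mulmxA. Qed.
Lemma rwEmx0 a : rw (Emx a) 0 i0 = a. Proof. by rewrite rwE E00. Qed.
Lemma rwEmx1 a : rw (Emx a) 0 i1 = 1. Proof. by rewrite rwE E01. Qed.
Lemma ratio_E a : ratio (rw (Emx a)) = a.
Proof. by rewrite /ratio rwEmx1 unitr1 rwEmx0 divr1. Qed.
Lemma unit_g M a : M \in unitmx -> g M a \in unitmx.
Proof. by move=> hM; rewrite /g unitmx_mul Emx_unit. Qed.

Lemma L4 M (c : seq A) : M \in unitmx -> Nf M (map rw (scanl g M c)) = c.
Proof.
elim: c M => //= a c IH M hM.
by rewrite rwE_g mulmxK // ratio_E IH // unit_g.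
Qed.

Lemma F2_map_rw s t : F2 (fun L R => exists2 D, inB D & R = D *m L) s t ->
  peq (map rw s) (map rw t).
Proof.
elim=> /=; first exact: F2nil.
by move=> x y s' t' [D hD ->] _ IH; constructor => //; apply: req_rwB.
Qed.

Lemma L3rw (c : seq A) Z T : inB Z ->
  peq (map rw (scanl g T (bprime Z c))) (map rw (scanl g (Z *m T) c)).
Proof. by move=> hZ; apply/F2_map_rw/L3. Qed.

Lemma L1 Z M (c : seq A) : inB Z -> M \in unitmx ->
  Nf M (map rw (scanl g (Z *m M) c)) = bprime Z c.
Proof.
move=> hZ hM; rewrite -{1}(L4 (bprime Z c) hM); apply: Nf_peq.
by apply/peq_sym/L3rw.
Qed.

Lemma L0 vs : forall v0 M, path (@adjacent A) v0 vs -> rows_equiv (rw M) v0 ->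
  M \in unitmx -> peq (map rw (scanl g M (Nf M vs))) vs.
Proof.
elim: vs => [|v1 vs IH] v0 M /= hp he hM; first exact: F2nil.
case/andP: hp => h01 hp.
set w := v1 *m invmx M.
have hv1 : v1 = w *m M by rewrite /w mulmxKV.
have hw1 : w 0 i1 \is a GRing.unit.
  by move: h01; rewrite (adj_eqv_l _ he) hv1 /rw adj_mul // adj_inf.
have hr : ratio w = w 0 i0 / w 0 i1 by rewrite /ratio hw1.
have key : rows_equiv (rw (g M (ratio w))) v1.
  rewrite rwE_g hv1; apply: req_mul; exists (w 0 i1) => //.
  by apply: row2P; rewrite scE; [rewrite rwEmx0 hr mulrC divrK | rewrite rwEmx1 mulr1].
constructor => //; apply: (IH v1) => //; exact: unit_g.
Qed.

Lemma rw1 : rw 1%:M = inf_row A.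
Proof. by rewrite /rw mulmx1. Qed.

Lemma loopP x0 s : is_loop (x0 :: s) <->
  [/\ rows_equiv x0 (inf_row A), rows_equiv (last x0 s) (inf_row A),
      (forall x, x \in x0 :: s -> unimodular x) & path (@adjacent A) x0 s].
Proof.
split; first by case=> y [s' [[<- <-] [h1 [h2 [h3 h4]]]]].
by case=> h1 h2 h3 h4; exists x0, s.
Qed.

Lemma loop_nil : ~ is_loop ([::] : seq 'rV[A]_2).
Proof. by case=> x [s' [h _]]. Qed.

Lemma inf_eqv_01 M : rows_equiv (rw M) (inf_row A) -> M i0 i1 = 0.
Proof.
case=> l hl /rowP /(_ i1); rewrite inf1 scE rwE => /esym/eqP.
by rewrite (mulrI_eq0 _ (mulrI hl)) => /eqP.
Qed.

Lemma inB1 : inB (1%:M : 'M[A]_2).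
Proof. by rewrite /inB one01 det1 !eqxx. Qed.

Lemma Eprod_foldl (c : seq A) : Eprod c = foldl g 1%:M c.
Proof. by []. Qed.

Lemma loop_L0 x0 s : is_loop (x0 :: s) ->
  peq (rw 1%:M :: map rw (scanl g 1%:M (Ncan (x0 :: s)))) (x0 :: s).
Proof.
case/loopP => h1 h2 h3 h4; constructor; first by rewrite rw1; apply: req_sym.
by apply: (L0 (v0 := x0)) => //; rewrite ?rw1 ?unitmx1 //; apply: req_sym.
Qed.

Lemma Ncan_valid s : is_loop s -> valid_sym (1%:M, Ncan s).
Proof.
case: s => [/loop_nil //|x0 s] hl.
have hp := peq_last (loop_L0 hl).
case/loopP: hl => _ h2 _ _.
rewrite /valid_sym /= inB1 Eprod_foldl /inB det_foldl det1 eqxx andbT.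
apply/eqP/inf_eqv_01; rewrite -last_rw_scanl.
exact: req_trans hp h2.
Qed.


Local Notation adj := (@adjacent A).

Lemma path_peq x y s t : peq (x :: s) (y :: t) -> path adj x s -> path adj y t.
Proof.
move=> h; inversion h; subst; clear h.
elim: H4 x y H2 => //= x' y' s' t' hxy' _ IH x y hxy /andP [h1 h2].
rewrite (IH x' y') // andbT.
by rewrite -(adj_eqv_l _ (req_sym hxy)) (adj_eqv_r _ hxy').
Qed.

Lemma loop_peq s t : is_loop s -> peq s t -> is_loop t.
Proof.
case: s => [/loop_nil //|x0 s] hl h; inversion h as [|a b c d hab hcd]; subst.
case/loopP: hl => h1 h2 h3 h4; apply/loopP; split.
- exact: req_trans (req_sym hab) h1.
- exact: req_trans (req_sym (peq_last h)) h2.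
- by move=> z /(peq_mem h) [x hx hxz]; apply: unimod_eqv hxz (h3 x hx).
- exact: path_peq h h4.
Qed.

Lemma lstep (s t : seq 'rV[A]_2) : is_loop s -> is_loop t -> loop_move s t -> loop_equiv s t.
Proof. by move=> h1 h2 h3; apply: rst_step. Qed.

Lemma peq_loop_equiv (s t : seq 'rV[A]_2) : is_loop s -> peq s t -> loop_equiv s t.
Proof.
move=> hl hp; have: forall l, is_loop (l ++ s) -> loop_equiv (l ++ s) (l ++ t).
  elim: hp => [|x y s' t' hxy _ IH] l hl'; first exact: rst_refl.
  have hl2 : is_loop (l ++ y :: s').
    by apply: loop_peq hl' _; apply: peq_cat; [apply: peq_refl | constructor => //; apply: peq_refl].
  apply: rst_trans (_ : loop_equiv _ (l ++ y :: s')) _.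
    exact: lstep hl' hl2 (lm_rep l s' hxy).
  by have := IH (rcons l y); rewrite -!cats1 -!catA /=; apply.
by move/(_ [::]); apply.
Qed.

Lemma loop_cat (L e : seq 'rV[A]_2) : is_loop L -> is_loop e -> is_loop (L ++ behead e).
Proof.
case: L => [/loop_nil //|x0 L]; case: e => [_ /loop_nil //|y0 e].
case/loopP => h1 h2 h3 h4 /loopP [k1 k2 k3 k4]; rewrite /= -cat_cons; apply/loopP; split => //.
- rewrite last_cat; case: e k2 k4 {k3} => //= y1 e k2 _.
- by move=> x; rewrite -cat_cons mem_cat => /orP [/h3 // | hx]; apply: k3; rewrite inE hx orbT.
- rewrite cat_path h4 /=; case: e k4 {k2 k3} => //= y1 e /andP [k5 ->].
  by rewrite andbT (adj_eqv_l _ (req_trans k1 (req_sym h2))).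
Qed.

Lemma loop_rev (s : seq 'rV[A]_2) : is_loop s -> is_loop (rev s).
Proof.
case: s => [/loop_nil //|x0 s] /loopP [h1 h2 h3 h4].
have e1 : rev (x0 :: s) = last x0 s :: rev (belast x0 s) by rewrite lastI rev_rcons.
rewrite e1; apply/loopP; split => //.
- by rewrite -(last_cons x0) -e1 rev_cons last_rcons.
- by move=> x; rewrite -e1 mem_rev; apply: h3.
- rewrite rev_path; apply: sub_path h4 => a b; by rewrite adj_sym.
Qed.

Lemma sym_loopE X (s : seq A) : sym_loop (X, s) = rw X :: map rw (scanl g X s).
Proof. by []. Qed.

Lemma path_rw M (s : seq A) : M \in unitmx -> path adj (rw M) (map rw (scanl g M s)).
Proof.
elim: s M => //= a s IH M hM; rewrite IH ?unit_g // andbT.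
by rewrite rwE_g /rw adj_mul // -/(rw (Emx a)) adj_inf rwEmx1 unitr1.
Qed.

Lemma unimod_scanl M (s : seq A) : M \in unitmx ->
  forall x, x \in map rw (scanl g M s) -> unimodular x.
Proof.
elim: s M => //= a s IH M hM x; rewrite inE => /orP [/eqP -> | ].
  by apply: unimod_rw; exact: unit_g.
by apply: IH; exact: unit_g.
Qed.

Lemma req_inf_B X : inB X -> rows_equiv (rw X) (inf_row A).
Proof.
move=> hX; apply: req_sym; have := rw_B 1%:M hX; rewrite mulmx1 rw1 => ->.
by apply/req_scl/inB_unit.
Qed.

Lemma foldl_X X (s : seq A) : foldl g X s = Eprod s *m X.
Proof. by rewrite -{1}(mul1mx X) foldl_gM. Qed.

Lemma sym_loop_loop (p : symbol A) : valid_sym p -> is_loop (sym_loop p).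
Proof.
case: p => X s /andP [/= hX hE]; rewrite sym_loopE; apply/loopP; split.
- exact: req_inf_B.
- by rewrite last_rw_scanl foldl_X; apply/req_inf_B/inB_mul.
- move=> x; rewrite inE => /orP [/eqP -> | ]; first exact/unimod_rw/inB_unitmx.
  by apply: unimod_scanl; exact: inB_unitmx.
- exact/path_rw/inB_unitmx.
Qed.

Lemma letter_loop_loop (x : bool * symbol A) : valid_sym x.2 -> is_loop (letter_loop x).
Proof. by case: x => [[] p] /= h; rewrite /letter_loop /=; [|apply: loop_rev]; apply: sym_loop_loop. Qed.

Lemma inf_loop : is_loop [:: inf_row A].
Proof.
apply/loopP; split => //; try exact: req_refl.
move=> x; rewrite inE => /eqP ->; exists 1, 0; rewrite inf0 inf1; ring.
Qed.

Lemma eval_loop (w : word A) : valid_word w -> is_loop (eval_word w).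
Proof.
elim: w => [|x w IH] /=; first by move=> _; exact: inf_loop.
case/andP => hx hw; rewrite /cat_loop; apply: loop_cat; last exact: IH.
exact: letter_loop_loop.
Qed.


Lemma Nf_cat M (l1 l2 : seq 'rV[A]_2) :
  Nf M (l1 ++ l2) = Nf M l1 ++ Nf (foldl g M (Nf M l1)) l2.
Proof. by elim: l1 M => //= x l1 IH M; rewrite IH. Qed.

Lemma split_N (l : seq 'rV[A]_2) x rest : is_loop (l ++ x :: rest) ->
  exists P M, [/\ M \in unitmx, rows_equiv (rw M) x &
    forall rest', Ncan (l ++ x :: rest') = P ++ Nf M rest'].
Proof.
case: l => [|x0 l] /=.
  case/loopP => h1 _ _ _; exists [::], 1%:M; split; rewrite ?unitmx1 ?rw1 //.
  exact: req_sym.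
case/loopP => h1 _ _; rewrite -cat_rcons cat_path => /andP [hp _].
have h1' : rows_equiv (rw 1%:M) x0 by rewrite rw1; exact: req_sym h1.
set c := Nf 1%:M (rcons l x).
exists c, (foldl g 1%:M c); split.
- by apply: unit_foldl; exact: unitmx1.
- have := peq_last (F2cons h1' (L0 hp h1' (unitmx1 _ _))).
  by rewrite last_rw_scanl last_rcons.
- by move=> rest'; rewrite /Ncan /= -cat_rcons Nf_cat.
Qed.


Local Notation weq := (@word_equiv A).

Lemma rel_weq (u v : word A) : rel_pair u v -> weq u v.
Proof. by move=> h; apply: rst_step; exists [::], [::], u, v; rewrite /= !cats0. Qed.

Lemma weq_ctx (l r u v : word A) : weq u v -> weq (l ++ u ++ r) (l ++ v ++ r).
Proof.
elim=> [x y [l' [r' [u' [v' [h [-> ->]]]]]] | x | x y _ IH | x y z _ IH1 _ IH2].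
- by apply: rst_step; exists (l ++ l'), (r' ++ r), u', v'; rewrite -!catA.
- exact: rst_refl.
- exact: rst_sym.
- exact: rst_trans IH1 IH2.
Qed.

Lemma path_from (l : seq 'rV[A]_2) x rest : is_loop (l ++ x :: rest) -> path adj x rest.
Proof.
case: l => [|x0 l] /= /loopP [_ _ _] //.
by rewrite cat_path => /andP [_] /= /andP [].
Qed.

Lemma rwM2 M a b : rw (g (g M a) b) = rw (Emx b *m Emx a) *m M.
Proof. by rewrite /rw /g !mulmxA. Qed.

Lemma EE01 a b : (Emx b *m Emx a) i0 i1 = b.
Proof. by rewrite mul2E !E01 E00 E11 mulr1 mulr0 addr0. Qed.
Lemma rwEE0 a b : rw (Emx b *m Emx a) 0 i0 = b * a - 1.
Proof. by rewrite rwE mul2E !E00 E01 E10; ring. Qed.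
Lemma rwEE1 a b : rw (Emx b *m Emx a) 0 i1 = b.
Proof. by rewrite rwE EE01. Qed.

Lemma idB a : mk2 (-1) 0 a (-1) *m (Emx 0 *m Emx a) = 1%:M.
Proof.
apply: mx2P; rewrite ?mul2E ?mk00 ?mk01 ?mk10 ?mk11 ?E00 ?E01 ?E10 ?E11
  ?one00 ?one01 ?one10 ?one11; ring.
Qed.
Lemma inB_Zb a : inB (mk2 (-1) 0 a (-1)).
Proof. by rewrite /inB det2 mk00 mk01 mk10 mk11 eqxx /= mul0r subr0 mulN1r opprK. Qed.

Lemma idS a b : b \is a GRing.unit -> mk2 b^-1 0 1 b *m (Emx b *m Emx a) = Emx (a - b^-1).
Proof.
move=> hb; have hbb : b^-1 * b = 1 by rewrite mulVr.
apply: mx2P; rewrite ?mul2E ?mk00 ?mk01 ?mk10 ?mk11 ?E00 ?E01 ?E10 ?E11.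
- have -> : b^-1 * (b * a + 1 * -1) + 0 * (-1 * a + 0 * -1) = (b^-1 * b) * a - b^-1 by ring.
  by rewrite hbb mul1r.
- have -> : b^-1 * (b * 1 + 1 * 0) + 0 * (-1 * 1 + 0 * 0) = b^-1 * b by ring.
  by rewrite hbb.
- ring.
- ring.
Qed.
Lemma inB_Zs b : b \is a GRing.unit -> inB (mk2 b^-1 0 1 b).
Proof. by move=> hb; rewrite /inB det2 mk00 mk01 mk10 mk11 eqxx /= mul0r subr0 mulVr. Qed.

Lemma rw_invM M N : M \in unitmx -> rw (N *m M) *m invmx M = rw N.
Proof. by move=> hM; rewrite /rw mulmxA mulmxK. Qed.


Lemma simp1 b gm : b \is a GRing.unit -> b ^+ 2 * ((b^-1) ^+ 2 * gm + 1 * b^-1) - b = gm.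
Proof.
move=> hb; have -> : b ^+ 2 * ((b^-1) ^+ 2 * gm + 1 * b^-1) - b = (b / b) ^+ 2 * gm + (b / b) * b - b by ring.
by rewrite divrr // expr1n !mul1r addrK.
Qed.
Lemma alt_simp b (rest : seq A) : b \is a GRing.unit -> alt false b (alt false b^-1 rest) = rest.
Proof. by move=> hb; rewrite alt_inv alt_cancel. Qed.

Lemma peq_cons_inv x y s t : peq (x :: s) (y :: t) -> rows_equiv x y /\ peq s t.
Proof. by move=> h; inversion h. Qed.

Lemma step_N (s t : seq 'rV[A]_2) : loop_step s t ->
  weq [:: pos (1%:M, Ncan s)] [:: pos (1%:M, Ncan t)].
Proof.
case=> hs ht hm; case: hm hs ht.
- move=> l r x y hxy hs ht.
  have -> : Ncan (l ++ y :: r) = Ncan (l ++ x :: r); last exact: rst_refl.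
  case: l {hs ht} => [|x0 l] //; rewrite /Ncan /=; apply: Nf_peq.
  apply: peq_cat; first exact: peq_refl.
  by constructor; [apply: req_sym | apply: peq_refl].
- move=> l r x y z hxz; rewrite /= => hs ht.
  have [P [M [hM hx hN]]] := split_N hs.
  have hv := Ncan_valid hs; rewrite !hN in hv *; rewrite /= in hv *.
  set a := ratio (y *m invmx M) in hv *.
  set b := ratio (z *m invmx (g M a)) in hv *.
  have [_ /peq_cons_inv [hz _]] := peq_cons_inv (L0 (path_from hs) hx hM).
  have hb : b = 0.
    have h1 : rows_equiv (rw M) (rw (g (g M a) b)).
      exact: req_trans hx (req_trans hxz (req_sym hz)).
    have := req_mul (invmx M) h1; rewrite rwM2 mulmxK // {1}/rw mulmxK //.
    by move/req_sym/inf_eqv_01; rewrite EE01.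
  rewrite hb in hv *.
  case: r hs ht hv => [|v r] hs ht hv.
    by rewrite cats0; apply: rel_weq; apply: rp_zero_end.
  have hLt := L0 (path_from ht) hx hM.
  set c := Nf M (v :: r) in hLt *.
  set M2 := g (g M a) 0.
  have hM2 : M2 \in unitmx by rewrite /M2 !unit_g.
  have eM : M = mk2 (-1) 0 a (-1) *m M2 by rewrite /M2 /g (mulmxA (Emx 0)) mulmxA idB mul1mx.
  have key : Nf M2 (v :: r) = bprime (mk2 (-1) 0 a (-1)) c.
    rewrite (Nf_peq _ (peq_sym hLt)) eM; exact: L1 (inB_Zb a) hM2.
  rewrite -/M2 key in hv *.
  have [gm [rest hc]] : exists gm rest, c = gm :: rest by rewrite /c /=; eexists; eexists.
  rewrite hc /= mk00 mk10 alt_one ?sqrrN ?expr1n // in hv *.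
  have e1 : 1 * gm + a * -1 = gm - a by ring.
  rewrite e1 in hv *.
  apply: rst_trans (rel_weq (rp_zero_mid hv)) _.
  have E : forall xx : A, xx = gm -> weq [:: pos (1%:M, P ++ xx :: rest)] [:: pos (1%:M, P ++ gm :: rest)].
    by move=> xx ->; apply: rst_refl.
  by apply: E; ring.
- move=> l r x y z hxy hyz hxz; rewrite /= => hs ht.
  have [P [M [hM hx hN]]] := split_N hs.
  have hv := Ncan_valid hs; rewrite !hN in hv *; rewrite /= in hv *.
  set a := ratio (y *m invmx M) in hv *.
  set b := ratio (z *m invmx (g M a)) in hv *.
  set d := ratio (z *m invmx M).
  have [hy /peq_cons_inv [hz _]] := peq_cons_inv (L0 (path_from hs) hx hM).
  have hz' := req_mul (invmx M) hz; rewrite rwM2 mulmxK // in hz'.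
  have hbu : b \is a GRing.unit.
    move: hxz; rewrite (adj_eqv_r _ hz) (adj_eqv_l _ hx) rwM2.
    by rewrite /rw adj_mul // -/(rw _) adj_inf rwEE1.
  have hd : d = a - b^-1.
    rewrite /d; case: hz' => l0 hl0 ->; rewrite ratio_scl // /ratio rwEE1 hbu rwEE0.
    have -> : (b * a - 1) / b = (b / b) * a - b^-1 by ring.
    by rewrite divrr // mul1r.
  rewrite hd.
  case: r hs ht hv => [|v r] hs ht hv.
    by apply: rel_weq; apply: rp_unit_end.
  have hLt : peq (map rw (scanl g (g M d) (Nf (g M d) (v :: r)))) (v :: r).
    by have [] := peq_cons_inv (L0 (path_from ht) hx hM).
  rewrite hd in hLt.
  set c := Nf (g M (a - b^-1)) (v :: r) in hLt *.
  set M2 := g (g M a) b.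
  have hM2 : M2 \in unitmx by rewrite /M2 !unit_g.
  have eM : g M (a - b^-1) = mk2 b^-1 0 1 b *m M2.
    by rewrite /M2 /g (mulmxA (Emx b)) mulmxA idS.
  have key : Nf M2 (v :: r) = bprime (mk2 b^-1 0 1 b) c.
    rewrite (Nf_peq _ (peq_sym hLt)) eM; exact: L1 (inB_Zs hbu) hM2.
  rewrite -/M2 key in hv *.
  have [gm [rest hc]] : exists gm rest, c = gm :: rest by rewrite /c /=; eexists; eexists.
  rewrite hc /= mk00 mk10 in hv *.
  apply: rst_trans (rel_weq (rp_unit_mid hbu hv)) _.
  have E : forall x0 x1 yy, x0 = a - b^-1 -> x1 = gm -> yy = rest ->
      weq [:: pos (1%:M, P ++ x0 :: x1 :: yy)] [:: pos (1%:M, P ++ (a - b^-1) :: gm :: rest)].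
    by move=> x0 x1 yy -> -> ->; apply: rst_refl.
  by apply: E; [reflexivity | exact: simp1 | exact: alt_simp].
Qed.


Lemma LB (s t : seq 'rV[A]_2) : loop_equiv s t ->
  s = t \/ [/\ is_loop s, is_loop t & weq [:: pos (1%:M, Ncan s)] [:: pos (1%:M, Ncan t)]].
Proof.
elim=> [x y hxy | x | x y _ IH | x y z _ IH1 _ IH2].
- by right; case: hxy => h1 h2 h3; split => //; apply: step_N.
- by left.
- case: IH => [-> | [h1 h2 h3]]; [by left | right; split => //; exact: rst_sym].
- case: IH1 => [-> // | [h1 h2 h3]]; case: IH2 => [<- | [k1 k2 k3]]; right; split => //.
  exact: rst_trans h3 k3.
Qed.

Lemma foldl_inv_mul (M0 N0 : 'M[A]_2) (s : seq A) :
  foldl (fun M a => M *m invmx (Emx a)) M0 s *m foldl g N0 s = M0 *m N0.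
Proof.
elim: s M0 N0 => //= a s IH M0 N0; rewrite IH /g mulmxA -(mulmxA M0).
by rewrite mulVmx ?Emx_unit // mulmx1.
Qed.

Lemma ZT Y X (s : seq A) : X \in unitmx -> Zmat Y X s *m foldl g X s = Y.
Proof. by move=> hX; rewrite /Zmat foldl_inv_mul mulmxKV. Qed.

Lemma Zmat_B Y X (s : seq A) : inB X -> inB (Eprod s) -> inB Y -> inB (Zmat Y X s).
Proof.
move=> hX hs hY; have hT : inB (foldl g X s) by rewrite foldl_X; apply: inB_mul.
have -> : Zmat Y X s = Y *m invmx (foldl g X s).
  by rewrite -{2}(ZT Y s (inB_unitmx hX)) mulmxK //; apply: inB_unitmx.
by apply: inB_mul => //; apply: inB_inv.
Qed.

Lemma VMul X Y (s t : seq A) : valid_sym (X, s) -> valid_sym (Y, t) ->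
  valid_sym (X, s ++ bprime (Zmat Y X s) t).
Proof.
case/andP => /= hX hs /andP [/= hY ht]; rewrite /valid_sym /= hX /=.
have hXu := inB_unitmx hX.
have [D hD eD] := L3fold t (foldl g X s) (Zmat_B hX hs hY).
rewrite ZT // (foldl_X Y) !foldl_X in eD.
have h1 : inB (Eprod (bprime (Zmat Y X s) t) *m (Eprod s *m X)).
  have -> : Eprod (bprime (Zmat Y X s) t) *m (Eprod s *m X) = invmx D *m (Eprod t *m Y).
    by rewrite eD mulKmx //; apply: inB_unitmx.
  by apply: inB_mul; [apply: inB_inv | apply: inB_mul].
rewrite Eprod_foldl foldl_cat -Eprod_foldl foldl_X.
have -> : Eprod (bprime (Zmat Y X s) t) *m Eprod s =
  Eprod (bprime (Zmat Y X s) t) *m (Eprod s *m X) *m invmx X by rewrite -mulmxA mulmxK.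
by apply: inB_mul => //; apply: inB_inv.
Qed.


Lemma weq_rel1 (u v : word A) : rel_pair u v -> forall l r, weq (l ++ u ++ r) (l ++ v ++ r).
Proof. by move=> h l r; apply/weq_ctx/rel_weq. Qed.

Lemma Mul (p : symbol A) (e : seq 'rV[A]_2) : valid_sym p -> is_loop e ->
  weq [:: pos p; pos (1%:M, Ncan e)] [:: pos (1%:M, Ncan (sym_loop p ++ behead e))].
Proof.
case: p => X a hp he.
have hb := Ncan_valid he.
set b := Ncan e in hb *.
set b2 := bprime (Zmat 1%:M X a) b.
have hv2 : valid_sym (X, a ++ b2) by apply: VMul.
apply: rst_trans (rel_weq (rp_mul hp hb)) _.
have hX : inB X by case/andP: hp.
have hv1 : valid_sym (1%:M, [::] : seq A) by rewrite /valid_sym /= /Eprod /= inB1.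
apply: rst_trans (_ : weq _ [:: pos (1%:M, [::]); pos (X, a ++ b2)]) _.
  by apply: rst_sym; have := weq_rel1 (rp_triv inB1) [::] [:: pos (X, a ++ b2)].
apply: rst_trans (rel_weq (rp_mul hv1 hv2)) _.
have -> : Zmat X 1%:M [::] = X by rewrite /Zmat /= invmx1 mulmx1.
rewrite cat0s.
have -> : bprime X (a ++ b2) = Nf 1%:M (map rw (scanl g (X *m 1%:M) (a ++ b2))).
  by rewrite L1 // unitmx1.
have -> : Ncan (sym_loop (X, a) ++ behead e) = Nf 1%:M (map rw (scanl g X a) ++ behead e) by [].
have -> // : Nf 1%:M (map rw (scanl g (X *m 1%:M) (a ++ b2))) = Nf 1%:M (map rw (scanl g X a) ++ behead e).
  2: exact: rst_refl.
apply: Nf_peq; rewrite mulmx1 scanl_cat map_cat; apply: peq_cat; first exact: peq_refl.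
apply: peq_trans (L3rw b _ (Zmat_B _ _ _)) _ => //; first by case/andP: hp.
  exact: inB1.
rewrite ZT ?inB_unitmx //.
case: e he {hb b2 hv2} @b => [/loop_nil //|e0 e] he /=.
by have /peq_cons_inv [] := loop_L0 he.
Qed.


Lemma rev_cons_last x0 (s : seq 'rV[A]_2) : rev (x0 :: s) = last x0 s :: rev (belast x0 s).
Proof. by rewrite lastI rev_rcons. Qed.

Lemma loop_bt x0 (L : seq 'rV[A]_2) : rows_equiv x0 (inf_row A) -> path adj x0 L ->
  (forall x, x \in x0 :: L -> unimodular x) ->
  is_loop ((x0 :: L) ++ behead (rev (x0 :: L))).
Proof.
move=> h1 h2 h3; rewrite rev_cons_last /=; apply/loopP; split => //.
- by rewrite last_cat -(last_cons x0) -rev_cons_last rev_cons last_rcons.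
- move=> x; rewrite -cat_cons mem_cat => /orP [/h3 // | ].
  by rewrite mem_rev => /mem_belast; apply: h3.
- rewrite cat_path h2 /= rev_path; apply: sub_path h2 => a b; by rewrite adj_sym.
Qed.

Lemma cancel_loop x0 (L : seq 'rV[A]_2) (e : seq 'rV[A]_2) :
  rows_equiv x0 (inf_row A) -> path adj x0 L ->
  (forall x, x \in x0 :: L -> unimodular x) -> is_loop e ->
  loop_equiv ((x0 :: L) ++ behead (rev (x0 :: L)) ++ behead e) e.
Proof.
move=> h1; elim/last_ind: L => [|L y IH] h2 h3 he.
  case: e he => [/loop_nil //|e0 e] he /=.
  apply: rst_sym; apply: peq_loop_equiv => //.
  constructor; last exact: peq_refl.
  by case/loopP: he => k1 _ _ _; apply: req_trans k1 (req_sym h1).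
have h2' : path adj x0 L by move: h2; rewrite rcons_path => /andP [].
have h3' : forall x, x \in x0 :: L -> unimodular x.
  by move=> x hx; apply: h3; rewrite -rcons_cons mem_rcons inE hx orbT.
have hl1 : is_loop ((x0 :: L) ++ behead (rev (x0 :: L)) ++ behead e).
  by rewrite catA; apply: loop_cat => //; apply: loop_bt.
have hl2 : is_loop ((x0 :: rcons L y) ++ behead (rev (x0 :: rcons L y)) ++ behead e).
  by rewrite catA; apply: loop_cat => //; apply: loop_bt.
apply: rst_trans (IH h2' h3' he).
apply: lstep hl2 hl1 _.
set x := last x0 L.
have E1 : x0 :: L = rcons (belast x0 L) x by rewrite lastI.
have E2 : behead (rev (x0 :: rcons L y)) = rev (x0 :: L).
  by rewrite -rcons_cons rev_rcons.
have E3 : rev (x0 :: L) = x :: behead (rev (x0 :: L)) by rewrite rev_cons_last.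
rewrite E2 {1}E3 -rcons_cons E1.
have -> : rcons (rcons (belast x0 L) x) y ++ (x :: behead (rev (rcons (belast x0 L) x)) ++ behead e)
  = belast x0 L ++ [:: x; y; x] ++ (behead (rev (rcons (belast x0 L) x)) ++ behead e).
  by rewrite -!cats1 -!catA.
have -> : rcons (belast x0 L) x ++ behead (rev (rcons (belast x0 L) x)) ++ behead e
  = belast x0 L ++ [:: x] ++ (behead (rev (rcons (belast x0 L) x)) ++ behead e).
  by rewrite -!cats1 -!catA.
by apply: lm_back; apply: req_refl.
Qed.


Lemma loop_cons (s : seq 'rV[A]_2) : is_loop s -> exists x0 s', s = x0 :: s'.
Proof. by case: s => [/loop_nil // | x0 s] _; exists x0, s. Qed.

Lemma weq_cons (x : bool * symbol A) (u v : word A) : weq u v -> weq (x :: u) (x :: v).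
Proof. by move=> h; have := weq_ctx [:: x] [::] h; rewrite !cats0. Qed.

Lemma triv1 : weq [:: pos (1%:M, [::] : seq A)] [::].
Proof. exact/rel_weq/rp_triv/inB1. Qed.

Lemma inv_sym (p : symbol A) : valid_sym p ->
  weq [:: (false, p)] [:: pos (1%:M, Ncan (rev (sym_loop p)))].
Proof.
move=> hp; set q := (1%:M, Ncan (rev (sym_loop p))).
have hsl := sym_loop_loop hp; have hrl := loop_rev hsl.
have hq : weq [:: pos p; pos q] [::].
  apply: rst_trans (Mul hp hrl) _.
  have hc : loop_equiv (sym_loop p ++ behead (rev (sym_loop p))) [:: inf_row A].
    have [x0 [L EL]] := loop_cons hsl; rewrite EL in hsl *.
    case/loopP: hsl => h1 h2 h3 h4.
    by have := cancel_loop h1 h4 h3 inf_loop; rewrite /= cats0.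
  case: (LB hc) => [-> | [_ _ h]]; first exact: triv1.
  exact: rst_trans h triv1.
apply: rst_trans (_ : weq _ ([:: (false, p)] ++ [:: pos p; pos q])) _.
  by apply: rst_sym; have := weq_ctx [:: (false, p)] [::] hq; rewrite !cats0.
by have := weq_rel1 (rp_cancel false hp) [::] [:: pos q].
Qed.

Lemma claimC (w : word A) : valid_word w -> weq w [:: pos (1%:M, Ncan (eval_word w))].
Proof.
elim: w => [_|x w IH /andP [hx hw]]; first by apply: rst_sym; exact: triv1.
apply: rst_trans (weq_cons x (IH hw)) _.
have he := eval_loop hw.
case: x hx => [[] p] hp.
  by rewrite /= /cat_loop /letter_loop /=; exact: Mul hp he.
have hrl := loop_rev (sym_loop_loop hp).
apply: rst_trans (_ : weq _ [:: pos (1%:M, Ncan (rev (sym_loop p))); pos (1%:M, Ncan (eval_word w))]) _.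
  by have := weq_ctx [::] [:: pos (1%:M, Ncan (eval_word w))] (inv_sym hp).
apply: rst_trans (Mul (Ncan_valid hrl) he) _.
rewrite /= /cat_loop /letter_loop /=.
have [x0 [s EL]] := loop_cons hrl; rewrite EL in hrl *.
have -> : Ncan (sym_loop (1%:M, Ncan (x0 :: s)) ++ behead (eval_word w)) =
          Ncan ((x0 :: s) ++ behead (eval_word w)).
  rewrite /Ncan /=; apply: Nf_peq; apply: peq_cat; last exact: peq_refl.
  by have /peq_cons_inv [] := loop_L0 hrl.
exact: rst_refl.
Qed.

Lemma part1 (s : seq 'rV[A]_2) : is_loop s ->
  exists w : word A, valid_word w /\ loop_equiv s (eval_word w).
Proof.
move=> hs; exists [:: pos (1%:M, Ncan s)]; split.
  by rewrite /valid_word /= Ncan_valid.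
rewrite /= /cat_loop /letter_loop /= cats0.
apply: peq_loop_equiv => //.
case: s hs => [/loop_nil //| x0 s] hs.
exact/peq_sym/loop_L0.
Qed.

Lemma dir1 (w1 w2 : word A) : valid_word w1 -> valid_word w2 ->
  loop_equiv (eval_word w1) (eval_word w2) -> weq w1 w2.
Proof.
move=> h1 h2 /LB [E | [_ _ h]].
  apply: rst_trans (claimC h1) _; rewrite E; apply: rst_sym; exact: claimC.
apply: rst_trans (claimC h1) _; apply: rst_trans h _; apply: rst_sym; exact: claimC.
Qed.


Lemma ctx_step (L e e' : seq 'rV[A]_2) : is_loop L -> is_loop e -> is_loop e' ->
  loop_move e e' -> loop_equiv (L ++ behead e) (L ++ behead e').
Proof.
move=> hL he he' hm.
have h1 := loop_cat hL he; have h2 := loop_cat hL he'.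
have [x0 [L' EL]] := loop_cons hL.
have EL2 : L = rcons (belast x0 L') (last x0 L') by rewrite EL lastI.
have hlast : rows_equiv (last x0 L') (inf_row A) by move: hL; rewrite EL => /loopP [].
case: hm he he' h1 h2.
- move=> [|h l] r x y hxy he he' h1 h2; first exact: rst_refl.
  apply: lstep h1 h2 _; rewrite /= !catA; exact: lm_rep.
- move=> [|h l] r x y z hxz he he' h1 h2; last first.
    by apply: lstep h1 h2 _; rewrite /= !catA; apply: lm_back.
  apply: lstep h1 h2 _; rewrite /= EL2 -!cats1 -!catA.
  apply: (@lm_back _ (belast x0 L') r (last x0 L') y z).
  move: he => /loopP [k1 _ _ _].
  exact: req_trans (req_trans hlast (req_sym k1)) hxz.
- move=> [|h l] r x y z hxy hyz hxz he he' h1 h2; last first.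
    by apply: lstep h1 h2 _; rewrite /= !catA; apply: lm_simplex.
  apply: lstep h1 h2 _; rewrite /= EL2 -!cats1 -!catA.
  move: he => /loopP [k1 _ _ _].
  have hlx : rows_equiv x (last x0 L') := req_trans k1 (req_sym hlast).
  apply: (@lm_simplex _ (belast x0 L') r (last x0 L') y z) => //.
    by rewrite (adj_eqv_l _ hlx).
  by rewrite (adj_eqv_l _ hlx).
Qed.

Lemma ctx_loop (L e e' : seq 'rV[A]_2) : is_loop L -> loop_equiv e e' ->
  e = e' \/ [/\ is_loop e, is_loop e' & loop_equiv (L ++ behead e) (L ++ behead e')].
Proof.
move=> hL; elim=> [x y [k1 k2 k3] | x | x y _ IH | x y z _ IH1 _ IH2].
- by right; split => //; apply: ctx_step.
- by left.
- case: IH => [-> | [h1 h2 h3]]; [by left | right; split => //; exact: rst_sym].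
- case: IH1 => [-> // | [h1 h2 h3]]; case: IH2 => [<- | [k1 k2 k3]]; right; split => //.
  exact: rst_trans h3 k3.
Qed.

Lemma ctx_word (l w w' : word A) : valid_word l -> is_loop (eval_word w) ->
  loop_equiv (eval_word w) (eval_word w') -> loop_equiv (eval_word (l ++ w)) (eval_word (l ++ w')).
Proof.
elim: l => //= x l IH /andP [hx hl] hw h.
rewrite /cat_loop; case: (ctx_loop (letter_loop_loop hx) (IH hl hw h)) => [-> | [_ _ h']] //.
exact: rst_refl.
Qed.


Definition Dm : 'M[A]_2 := mk2 (-1) 0 0 (-1).
Definition Ds (u : A) : 'M[A]_2 := mk2 u 0 (-1) u^-1.

Lemma idZ0 a b : Emx b *m (Emx 0 *m Emx a) = Dm *m Emx (a + b).
Proof.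
rewrite /Dm; apply: mx2P; rewrite ?mul2E ?mk00 ?mk01 ?mk10 ?mk11 ?E00 ?E01 ?E10 ?E11; ring.
Qed.
Lemma idU a (u : A) : u \is a GRing.unit -> Emx u *m Emx a = Ds u *m Emx (a - u^-1).
Proof.
move=> hu; have huu : u * u^-1 = 1 by rewrite divrr.
rewrite /Ds; apply: mx2P; rewrite ?mul2E ?mk00 ?mk01 ?mk10 ?mk11 ?E00 ?E01 ?E10 ?E11.
- have -> : u * (a - u^-1) + 0 * -1 = u * a - u * u^-1 by ring.
  by rewrite huu; ring.
- ring.
- have -> : -1 * (a - u^-1) + u^-1 * -1 = - a by ring.
  ring.
- ring.
Qed.
Lemma inB_Dm : inB Dm.
Proof. by rewrite /inB /Dm det2 mk00 mk01 mk10 mk11 eqxx /= mul0r subr0 mulN1r opprK. Qed.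
Lemma inB_Ds (u : A) : u \is a GRing.unit -> inB (Ds u).
Proof. by move=> hu; rewrite /inB /Ds det2 mk00 mk01 mk10 mk11 eqxx /= mul0r subr0 divrr. Qed.
Lemma bprime_m1 (t : seq A) : bprime Dm t = t.
Proof.
case: t => //= b t; rewrite /Dm mk00 mk10 alt_one ?sqrrN ?expr1n //.
by rewrite mul0r addr0 mul1r.
Qed.
Lemma bprime_Ds (u : A) b (t : seq A) : bprime (Ds u) (b :: t) = (u ^+ 2 * b + -1 * u) :: alt false u t.
Proof. by rewrite /= /Ds mk00 mk10. Qed.

Lemma inB_cancel D M : inB D -> inB (D *m M) -> inB M.
Proof.
move=> hD hDM; rewrite -(mulKmx (inB_unitmx hD) M).
by apply: inB_mul => //; apply: inB_inv.
Qed.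

Lemma Eprod_cat (s m : seq A) : Eprod (s ++ m) = foldl g (Eprod s) m.
Proof. by rewrite Eprod_foldl foldl_cat. Qed.

Lemma rel_valid (w1 w2 : word A) : rel_pair w1 w2 -> valid_word w1 /\ valid_word w2.
Proof.
case=> [b p hp | X s Y t hp hq | X hX | X s a hv | X s a b t hv | X s a u hu hv
       | X s a u b t hu hv]; rewrite /valid_word /= ?andbT.
- by rewrite hp.
- by rewrite hp hq; split => //; apply: VMul.
- by rewrite /valid_sym /= /Eprod /= hX inB1.
- split => //; move: hv; rewrite /valid_sym /= => /andP [-> h] /=.
  rewrite Eprod_cat /= in h; rewrite Eprod_foldl; apply: (inB_cancel (D := Emx 0 *m Emx a)).
    by rewrite /inB det_mulmx !detE mulr1 eqxx andbT mul2E !E00 !E01 E11 mul0r mulr0 addr0.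
  by rewrite -Eprod_foldl -mulmxA; move: h; rewrite /g.
- split => //; move: hv; rewrite /valid_sym /= => /andP [-> h] /=.
  rewrite Eprod_cat /= in h; rewrite Eprod_cat /=.
  rewrite /g (mulmxA (Emx 0)) mulmxA idZ0 -mulmxA -/(g _ (a + b)) in h.
  have [D hD eD] := L3fold t (g (Eprod s) (a + b)) inB_Dm.
  rewrite bprime_m1 in eD; rewrite eD in h.
  exact: inB_cancel hD h.
- split => //; move: hv; rewrite /valid_sym /= => /andP [-> h] /=.
  rewrite Eprod_cat /= in h; rewrite Eprod_cat /=.
  rewrite /g mulmxA idU // -mulmxA in h.
  exact: inB_cancel (inB_Ds hu) h.
- split => //; move: hv; rewrite /valid_sym /= => /andP [-> h] /=.
  rewrite Eprod_cat /= in h; rewrite Eprod_cat /=.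
  have e1 : g (g (Eprod s) a) u = Ds u *m g (Eprod s) (a - u^-1).
    by rewrite /g mulmxA idU // -mulmxA.
  have h' : inB (foldl g (g (g (Eprod s) a) u) (b :: t)) := h.
  have [D hD eD] := L3fold (b :: t) (g (Eprod s) (a - u^-1)) (inB_Ds hu).
  rewrite e1 eD bprime_Ds in h'.
  have := inB_cancel hD h'; congr (inB (foldl _ _ (_ :: _))).
  by rewrite mulN1r.
Qed.


Lemma symE0 X (s : seq A) :
  sym_loop (X, s) = rcons (belast (rw X) (map rw (scanl g X s))) (rw (foldl g X s)).
Proof. by rewrite sym_loopE lastI last_rw_scanl. Qed.

Lemma symE X (s m : seq A) : sym_loop (X, s ++ m) =
  rcons (belast (rw X) (map rw (scanl g X s))) (rw (foldl g X s)) ++ map rw (scanl g (foldl g X s) m).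
Proof. by rewrite sym_loopE scanl_cat map_cat -cat_cons -symE0. Qed.

Lemma evalE (p : symbol A) (r : word A) :
  eval_word (pos p :: r) = sym_loop p ++ behead (eval_word r).
Proof. by []. Qed.

Lemma adj_step T a : T \in unitmx -> adj (rw T) (rw (g T a)).
Proof. by move=> hT; rewrite rwE_g /rw adj_mul // -/(rw _) adj_inf rwEmx1 unitr1. Qed.

Lemma adj_step2 T a (u : A) : T \in unitmx -> u \is a GRing.unit ->
  adj (rw T) (rw (g (g T a) u)).
Proof. by move=> hT hu; rewrite rwM2 /rw adj_mul // -/(rw _) adj_inf rwEE1. Qed.

Lemma inB_E0 a : inB (Emx 0 *m Emx a).
Proof.
by rewrite /inB det_mulmx !detE mulr1 eqxx andbT mul2E !E00 !E01 E11 mul0r mulr0 addr0.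
Qed.

Lemma rel_eval (w1 w2 : word A) (r : word A) : rel_pair w1 w2 -> valid_word r ->
  loop_equiv (eval_word (w1 ++ r)) (eval_word (w2 ++ r)).
Proof.
move=> hrel hr; have [hv1 hv2] := rel_valid hrel.
have hl1 : is_loop (eval_word (w1 ++ r)) by apply: eval_loop; rewrite /valid_word all_cat; apply/andP.
have hl2 : is_loop (eval_word (w2 ++ r)) by apply: eval_loop; rewrite /valid_word all_cat; apply/andP.
have he := eval_loop hr.
case: hrel hv1 hv2 hl1 hl2 => [b p hp | X s Y t hp hq | X hX | X s a hv | X s a b t hv | X s a u hu hv
       | X s a u b t hu hv] _ _ hl1 hl2.
-
  have hL := letter_loop_loop (x := (b, p)) hp.
  have eR : letter_loop (~~ b, p) = rev (letter_loop (b, p)) by case: b {hl1 hl2 hL}; rewrite /letter_loop /= ?revK.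
  rewrite /= /cat_loop eR.
  have [x0 [L EL]] := loop_cons hL; rewrite EL in hL *.
  case/loopP: hL => h1 h2 h3 h4.
  have := cancel_loop h1 h4 h3 he.
  by rewrite rev_cons_last.
-
  apply: peq_loop_equiv hl1 _.
  rewrite /= /cat_loop /letter_loop /= scanl_cat map_cat -catA.
  constructor; first exact: req_refl.
  apply: peq_cat; first exact: peq_refl.
  apply: peq_cat; last exact: peq_refl.
  have hX : inB X by case/andP: hp.
  have hXs : inB (Eprod s) by case/andP: hp.
  have hY : inB Y by case/andP: hq.
  apply: peq_sym; have := L3rw t (foldl g X s) (Zmat_B hX hXs hY).
  by rewrite ZT //; apply: inB_unitmx.
-
  apply: peq_loop_equiv hl1 _.
  rewrite /= /cat_loop /letter_loop /=.
  have [e0 [e' Ee]] := loop_cons he; rewrite Ee in he *.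
  constructor; last exact: peq_refl.
  case/loopP: he => k1 _ _ _.
  by apply: req_trans (req_inf_B hX) (req_sym k1).
-
  have hX : inB X by case/andP: hv.
  rewrite !cat1s !evalE symE symE0 in hl1 hl2 *.
  apply: lstep hl1 hl2 _; rewrite /= -cats1 -!catA /=.
  apply: lm_back; rewrite /g mulmxA; exact: req_rwB (inB_E0 a).
-
  have hX : inB X by case/andP: hv.
  rewrite !cat1s !evalE !symE -!catA in hl1 hl2 *.
  set P := belast _ _ in hl1 hl2 *; set T := foldl g X s in hl1 hl2 *.
  set E := behead (eval_word r) in hl1 hl2 *.
  pose T4 := g (g (g T a) 0) b.
  pose mid := rcons P (rw T) ++ (rw T4 :: map rw (scanl g T4 t)) ++ E.
  have eT4 : T4 = Dm *m g T (a + b) by rewrite /T4 /g (mulmxA (Emx 0)) mulmxA idZ0 -mulmxA.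
  have hpm : peq (rcons P (rw T) ++ map rw (scanl g T ([:: a + b] ++ t)) ++ E) mid.
    apply: peq_cat; first exact: peq_refl.
    apply: peq_cat; last exact: peq_refl.
    rewrite /= eT4; constructor; first exact: req_rwB inB_Dm.
    by have := L3rw t (g T (a + b)) inB_Dm; rewrite bprime_m1.
  have hmid := loop_peq hl2 hpm.
  apply: (rst_trans _ _ _ mid); last exact: rst_sym (peq_loop_equiv hl2 hpm).
  apply: lstep hl1 hmid _; rewrite /mid /= -cats1 -!catA /=.
  apply: lm_back; rewrite /g mulmxA; exact: req_rwB (inB_E0 a).
-
  have hX : inB X by case/andP: hv.
  rewrite !cat1s !evalE !symE -!catA in hl1 hl2 *.
  set P := belast _ _ in hl1 hl2 *; set T := foldl g X s in hl1 hl2 *.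
  set E := behead (eval_word r) in hl1 hl2 *.
  have hT : T \in unitmx by apply: unit_foldl; apply: inB_unitmx.
  pose mid := rcons P (rw T) ++ [:: rw (g (g T a) u)] ++ E.
  have hpm : peq (rcons P (rw T) ++ map rw (scanl g T [:: a - u^-1]) ++ E) mid.
    apply: peq_cat; first exact: peq_refl.
    apply: peq_cat; last exact: peq_refl.
    have eT2 : g (g T a) u = Ds u *m g T (a - u^-1) by rewrite /g mulmxA idU // -mulmxA.
    rewrite /= eT2; constructor; [exact: req_rwB (inB_Ds hu) | exact: F2nil].
  have hmid := loop_peq hl2 hpm.
  apply: (rst_trans _ _ _ mid); last exact: rst_sym (peq_loop_equiv hl2 hpm).
  apply: lstep hl1 hmid _; rewrite /mid /= -cats1 -!catA /=.
  by apply: lm_simplex; [apply: adj_step | apply/adj_step/unit_g | apply: adj_step2].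
-
  have hX : inB X by case/andP: hv.
  rewrite !cat1s !evalE !symE -!catA in hl1 hl2 *.
  set P := belast _ _ in hl1 hl2 *; set T := foldl g X s in hl1 hl2 *.
  set E := behead (eval_word r) in hl1 hl2 *.
  have hT : T \in unitmx by apply: unit_foldl; apply: inB_unitmx.
  pose T2 := g (g T a) u.
  pose mid := rcons P (rw T) ++ (rw T2 :: map rw (scanl g T2 (b :: t))) ++ E.
  have eT2 : T2 = Ds u *m g T (a - u^-1) by rewrite /T2 /g mulmxA idU // -mulmxA.
  have hpm : peq (rcons P (rw T) ++
     map rw (scanl g T ([:: a - u^-1; u ^+ 2 * b - u] ++ alt false u t)) ++ E) mid.
    apply: peq_cat; first exact: peq_refl.
    apply: peq_cat; last exact: peq_refl.
    rewrite [map _ _]/= /mid eT2; constructor; first exact: req_rwB (inB_Ds hu).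
    have := L3rw (b :: t) (g T (a - u^-1)) (inB_Ds hu); rewrite bprime_Ds.
    have EE : forall xx, xx = u ^+ 2 * b + -1 * u ->
      peq (map rw (scanl g (g T (a - u^-1)) (u ^+ 2 * b + -1 * u :: alt false u t)))
          (map rw (scanl g (Ds u *m g T (a - u^-1)) (b :: t))) ->
      peq (map rw (scanl g (g T (a - u^-1)) (xx :: alt false u t)))
          (map rw (scanl g (Ds u *m g T (a - u^-1)) (b :: t))).
      by move=> xx ->.
    by apply: EE; ring.
  have hmid := loop_peq hl2 hpm.
  apply: (rst_trans _ _ _ mid); last exact: rst_sym (peq_loop_equiv hl2 hpm).
  apply: lstep hl1 hmid _; rewrite /mid /= -cats1 -!catA /=.
  by apply: lm_simplex; [apply: adj_step | apply/adj_step/unit_g | apply: adj_step2].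
Qed.


Lemma dir2 (w1 w2 : word A) : weq w1 w2 ->
  (valid_word w1 = valid_word w2) /\
  (valid_word w1 -> loop_equiv (eval_word w1) (eval_word w2)).
Proof.
elim=> [x y [l [r [u [v [h [-> ->]]]]]] | x | x y _ [e IH] | x y z _ [e1 IH1] _ [e2 IH2]].
- have [hu hv] := rel_valid h.
  have vu : valid_word u = true by [].
  have vv : valid_word v = true by [].
  rewrite /valid_word !all_cat -/(valid_word u) -/(valid_word v) vu vv; split => //.
  case/andP => hl /andP [_ hr].
  apply: ctx_word => //; last exact: rel_eval.
  by apply: eval_loop; rewrite /valid_word all_cat; apply/andP.
- by split => //; move=> _; exact: rst_refl.
- split; first by rewrite e.
  by rewrite -e => h; apply: rst_sym; apply: IH.
- split; first by rewrite e1 e2.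
  by move=> h; apply: rst_trans (IH1 h) (IH2 _); rewrite -e1.
Qed.

End P.

Theorem theorem6p1 (A : comUnitRingType) :
  (forall s : seq 'rV[A]_2, is_loop s ->
     exists w : word A, valid_word w /\ loop_equiv s (eval_word w)) /\
  (forall w1 w2 : word A, valid_word w1 -> valid_word w2 ->
     (loop_equiv (eval_word w1) (eval_word w2) <-> word_equiv w1 w2)).
Proof.
split; first exact: part1.
move=> w1 w2 h1 h2; split; first exact: dir1.
by move=> h; exact: (proj2 (dir2 h)) h1.
Qed.
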